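(* For every $n \geq 1$, every $c \in \{1,\ldots,n\}$, every $p=(p_1,\ldots,p_n) \in (0,1)^n$ with $p_1+\cdots+p_n \leq 1$, and every integer $k \geq 0$, $$\Pr\{T_{c,n}(p) > k\} = \sum_{i=0}^{c-1} (-1)^{c-1-i} \binom{n-i-1}{n-c} \sum_{J \in S_{i,n}} (p_0 + P_J)^k.$$
   Context: Let $p=(p_1,\ldots,p_n)$ with $p_i \in (0,1)$ and $p_1+\cdots+p_n \le 1$, and set $p_0 = 1-(p_1+\cdots+p_n)$. Coupons are drawn independently, one at each time $1,2,\ldots$, from $\{0,1,\ldots,n\}$, coupon $i$ being drawn with probability $p_i$; coupon $0$ (the null coupon) never belongs to the collection. For $1 \le c \le n$, $T_{c,n}(p)$ is the number of draws needed until, for the first time, $c$ distinct coupons among $\{1,\ldots,n\}$ have been drawn. For $J \subseteq \{1,\ldots,n\}$, $P_J = \sum_{j\in J} p_j$ with $P_\emptyset = 0$, and $S_{i,n} = \{J \subseteq \{1,\ldots,n\} : |J| = i\}$. Convention: $0^0=1$. *)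

(* Defs.v *)
From HB Require Import structures.
From mathcomp Require Import all_boot all_order all_algebra.
Set Implicit Arguments. Unset Strict Implicit. Unset Printing Implicit Defensive.
Import Order.TTheory GRing.Theory Num.Theory.
Local Open Scope ring_scope.

(* Coupons are the elements of 'I_n.+1 ; ord0 is the null coupon 0 and
   coupon (lift ord0 j) (value j+1) corresponds to p j, j : 'I_n. *)

Definition p0 (R : ringType) (n : nat) (p : 'I_n -> R) : R :=
  1 - \sum_(j < n) p j.

Definition coupon_prob (R : ringType) (n : nat) (p : 'I_n -> R)
  (x : 'I_n.+1) : R :=
  match unlift ord0 x with
  | None => p0 p
  | Some j => p j
  end.

Definition PJ (R : ringType) (n : nat) (p : 'I_n -> R) (J : {set 'I_n}) : R :=
  \sum_(j in J) p j.

Definition collected (n k : nat) (s : {ffun 'I_k -> 'I_n.+1}) (m : nat) : nat :=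
  #|[set s i | i : 'I_k & (i < m)%N] :\ ord0|.

(* T_{c,n} > k for a draw sequence whose first k draws are s: no time
   m <= k at which c distinct coupons of {1..n} have been collected. *)
Definition T_gt (n c k : nat) (s : {ffun 'I_k -> 'I_n.+1}) : bool :=
  [forall m : 'I_k.+1, (collected s m < c)%N].

Definition seq_prob (R : ringType) (n k : nat) (p : 'I_n -> R)
  (s : {ffun 'I_k -> 'I_n.+1}) : R :=
  \prod_(i < k) coupon_prob p (s i).

(* Pr{ T_{c,n}(p) > k }: the event depends only on the first k draws *)
Definition prob_T_gt (R : ringType) (n c k : nat) (p : 'I_n -> R) : R :=
  \sum_(s : {ffun 'I_k -> 'I_n.+1} | T_gt c s) seq_prob p s.

(* Main.v *)
Require Import Defs.
From HB Require Import structures.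
From mathcomp Require Import all_boot all_order all_algebra.
From mathcomp Require Import zify ring.
Import Order.TTheory GRing.Theory Num.Theory.
Local Open Scope ring_scope.

Section Prob.
Variables (R : comNzRingType) (n k : nat) (p : 'I_n -> R).

Definition supp (s : {ffun 'I_k -> 'I_n.+1}) (m : nat) : {set 'I_n} :=
  [set j | [exists i : 'I_k, (i < m)%N && (s i == lift ord0 j)]].

Lemma collectedE s m : collected s m = #|supp s m|.
Proof.
rewrite /collected -[RHS](card_imset _ (@lift_inj _ ord0)); apply: eq_card => x.
rewrite !inE.
case: (unliftP ord0 x) => [j ->|->].
  rewrite (mem_imset _ _ (@lift_inj _ ord0)) inE eq_sym neq_lift /=.
  apply/imsetP/existsP => [[i]|[i /andP[im /eqP e]]].
    by rewrite inE => im e; exists i; rewrite im e eqxx.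
  by exists i; rewrite ?inE.
rewrite eqxx /=; apply/esym/imsetP => -[j _ /eqP].
by rewrite (negbTE (neq_lift _ _)).
Qed.

Lemma T_gtE c s : T_gt c s = (#|supp s k| < c)%N.
Proof.
apply/forallP/idP => [H | H m].
  by have := H ord_max; rewrite collectedE.
rewrite collectedE; apply: leq_ltn_trans H; apply: subset_leq_card.
apply/subsetP => j; rewrite !inE => /existsP[i /andP[_ e]].
by apply/existsP; exists i; rewrite ltn_ord e.
Qed.

Definition okJ (J : {set 'I_n}) (x : 'I_n.+1) : bool :=
  match unlift ord0 x with None => true | Some j => j \in J end.

Lemma suppE (J : {set 'I_n}) s : (supp s k \subset J) = [forall i, okJ J (s i)].
Proof.
apply/subsetP/forallP => [H i | H j].
  rewrite /okJ; case: (unliftP ord0 (s i)) => [j e|e] //.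
  by apply: H; rewrite inE; apply/existsP; exists i; rewrite ltn_ord e eqxx.
rewrite /supp inE => /existsP[i /andP[_ /eqP e]].
by have := H i; rewrite /okJ e liftK.
Qed.

Lemma sum_sub (J : {set 'I_n}) :
  \sum_(s | supp s k \subset J) seq_prob p s = (p0 p + PJ p J) ^+ k.
Proof.
pose g x := if okJ J x then coupon_prob p x else 0.
have Hg : \sum_x g x = p0 p + PJ p J.
  rewrite big_ord_recl /g /okJ /coupon_prob unlift_none /PJ big_mkcond /=.
  apply: (congr1 (fun x => p0 p + x)); rewrite [RHS]big_mkcond; apply: eq_bigr => j _.
  by rewrite liftK.
rewrite -Hg -[X in _ ^+ X](card_ord k) -prodr_const bigA_distr_bigA /= big_mkcond.
apply: eq_bigr => s _; rewrite suppE /seq_prob.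
case: (boolP [forall i, okJ J (s i)]) => [/forallP H|].
  by apply: eq_bigr => i _; rewrite /g H.
rewrite negb_forall => /existsP[i Hi].
by rewrite (bigD1 i) //= /g (negbTE Hi) mul0r.
Qed.

End Prob.
Arguments supp {n k}. Arguments T_gtE {n k}. Arguments sum_sub {R n k}.
Lemma trin x y z : (z <= y -> y <= x -> 'C(x - z, y - z) * 'C(x, z) = 'C(x, y) * 'C(y, z))%N.
Proof.
move=> zy yx.
have zx : (z <= x)%N by lia.
have e1 := bin_fact (leq_sub2r z yx).
have e2 := bin_fact zx. have e3 := bin_fact yx. have e4 := bin_fact zy.
rewrite (_ : x - z - (y - z) = x - y)%N in e1; last by lia.
have K : (0 < z`! * ((y-z)`! * (x-y)`!))%N by rewrite !muln_gt0 !fact_gt0.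
apply/eqP; rewrite -(eqn_pmul2r K); apply/eqP.
transitivity ('C(x, z) * (z`! * ('C(x - z, y - z) * ((y - z)`! * (x - y)`!))))%N; first by ring.
rewrite e1 e2 -e3.
transitivity ('C(x, y) * ((x-y)`! * ('C(y, z) * (z`! * (y - z)`!))))%N; last by ring.
by rewrite e4; ring.
Qed.

Lemma altsum (R : comNzRingType) d :
  \sum_(u < d.+1) (-1) ^+ (d - u) * ('C(d, u))%:R = (d == 0)%N%:R :> R.
Proof.
have := exprDn (-1 : R) 1 d; rewrite addNr expr0n => ->.
by apply: eq_bigr => u _; rewrite expr1n mulr1 mulr_natr.
Qed.

Definition XX (R : comNzRingType) n a i : R := (((a <= i)%N * 'C(n - a, i - a))%N)%:R.

Lemma Tc (R : comNzRingType) n a c : (c < n)%N ->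
  \sum_(0 <= i < c.+1) (-1) ^+ (c - i) * ('C(n - i, c - i))%:R * XX R n a i
   = (a == c)%:R.
Proof.
move=> cn; rewrite /XX.
case: (leqP a c) => ac; last first.
  rewrite big1_seq ?(gtn_eqF ac) //= => i; rewrite mem_iota => /andP[_ hi].
  by rewrite (_ : (a <= i)%N = false) ?mul0n ?mulr0 //; lia.
rewrite (@big_cat_nat _ _ _ a) ?leqW //= big1_seq ?add0r; last first.
  move=> i; rewrite mem_iota => /andP[_ hi].
  by rewrite (_ : (a <= i)%N = false) ?mul0n ?mulr0 //; lia.
rewrite -{1}[a]add0n big_addn subSn // big_mkord.
transitivity (('C(n - a, c - a))%:R *
   \sum_(u < (c - a).+1) (-1) ^+ ((c - a) - u) * ('C(c - a, u))%:R : R).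
  rewrite big_distrr; apply: eq_bigr => u _.
  have ua : (u <= c - a)%N by rewrite -ltnS ltn_ord.
  rewrite leq_addl mul1n addnK.
  rewrite (_ : c - (u + a) = c - a - u)%N; last by lia.
  rewrite (_ : n - (u + a) = n - a - u)%N; last by lia.
  rewrite -mulrA -natrM trin //; last by lia.
  by rewrite natrM /= mulrCA.
rewrite altsum; case: (eqVneq a c) => [->|ne].
  by rewrite subnn bin0 mul1r.
by rewrite (_ : (c - a == 0)%N = false) ?mulr0 //; lia.
Qed.

Lemma Sc (R : comNzRingType) n a c : (c <= n)%N ->
  \sum_(0 <= i < c) (-1) ^+ (c - 1 - i) * ('C(n - i - 1, c - 1 - i))%:R * XX R n a i
   = (a < c)%:R.
Proof.
elim: c => [|c IH] cn; first by rewrite big_geq.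
transitivity (\sum_(0 <= i < c.+1) (-1) ^+ (c - i) * ('C(n - i, c - i))%:R * XX R n a i
  + \sum_(0 <= i < c.+1) (if (i < c)%N then (-1) ^+ (c - 1 - i) * ('C(n - i - 1, c - 1 - i))%:R * XX R n a i else 0)).
  rewrite -big_split; apply: eq_big_nat => i /andP[_ hi].
  rewrite subn1 /=.
  case: (ltnP i c) => ic.
    have e1 : (c - i = (c - 1 - i).+1)%N by lia.
    have e2 : (n - i = (n - i - 1).+1)%N by lia.
    move: e2; set N := (n - i - 1)%N => e2.
    rewrite e1 e2 binS natrD exprS; ring.
  have -> : i = c by lia.
  by rewrite subnn !bin0 addr0.
rewrite Tc; last by lia.
rewrite big_nat_recr //= ltnn addr0.
rewrite (eq_big_nat _ _ (F2 := fun i => (-1) ^+ (c - 1 - i) * ('C(n - i - 1, c - 1 - i))%:R * XX R n a i)); last first.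
  by move=> i /andP[_ ->].
rewrite IH; last by lia.
case: (ltngtP a c) => h.
- by rewrite (_ : (a < c.+1)%N = true) ?add0r //; lia.
- by rewrite (_ : (a < c.+1)%N = false) ?addr0 //; lia.
- by rewrite h ltnSn addr0.
Qed.


Section CNT.
Local Open Scope nat_scope.
Lemma cnt_sup (T : finType) (A : {set T}) i :
  #|[set J : {set T} | A \subset J & #|J| == i]| =
  ((#|A| <= i) * 'C(#|T| - #|A|, i - #|A|))%N.
Proof.
case: (leqP #|A| i) => h; last first.
  rewrite mul0n; apply: eq_card0 => J; rewrite inE.
  apply/negP => /andP[/subset_leq_card hs /eqP e]; lia.
rewrite mul1n -(cardsC A) addKn -cards_draws.
have dK (B : {set T}) : B \subset ~: A -> (B :|: A) :\: A = B.
  by move=> sB; rewrite setDUl setDv setU0 setDE; apply/setIidPl.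
have -> : [set J : {set T} | A \subset J & #|J| == i] =
  (fun B => B :|: A) @: [set B : {set T} | B \subset ~: A & #|B| == i - #|A|].
  apply/setP => J; rewrite inE; apply/andP/imsetP.
    move=> [sAJ /eqP cJ]; exists (J :\: A).
      rewrite inE cardsD (setIidPr sAJ) cJ eqxx andbT; apply/subsetP => x; rewrite !inE => /andP[]. by [].
    apply/setP => x; rewrite !inE; case: (boolP (x \in A)) => xA /=.
    by rewrite (subsetP sAJ). by rewrite orbF.
  move=> [B]; rewrite inE => /andP[sBA /eqP cB] ->; split; first exact: subsetUr.
  have d0 : B :&: A = set0.
    apply/eqP; rewrite setI_eq0 -(setCK A) -subsets_disjoint //.
  have := cardsUI B A; rewrite d0 cards0 addn0 cB => ->; apply/eqP; lia.
apply: card_in_imset => B1 B2; rewrite !inE => /andP[s1 _] /andP[s2 _] e.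
by rewrite -(dK _ s1) e dK.
Qed.
End CNT.


Theorem theorem1 (R : realFieldType) (n c : nat) (p : 'I_n -> R) (k : nat) :
  (1 <= n)%N -> (1 <= c <= n)%N ->
  (forall i, 0 < p i < 1) -> \sum_(i < n) p i <= 1 ->
  prob_T_gt c k p =
  \sum_(i < c) (-1) ^+ (c - 1 - i) * ('C(n - i - 1, n - c))%:R *
     \sum_(J : {set 'I_n} | #|J| == i) (p0 p + PJ p J) ^+ k.
Proof.
move=> _ /andP[c1 cn] _ _.
rewrite /prob_T_gt.
transitivity (\sum_(s : {ffun 'I_k -> 'I_n.+1}) seq_prob p s * (#|supp s k| < c)%N%:R).
  rewrite big_mkcond; apply: eq_bigr => s _; rewrite T_gtE.
  by case: ifP => _; rewrite ?mulr1 ?mulr0.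
symmetry.
transitivity (\sum_(i < c) (-1) ^+ (c - 1 - i) * ('C(n - i - 1, n - c))%:R *
   \sum_(s : {ffun 'I_k -> 'I_n.+1}) seq_prob p s * (#|[set J : {set 'I_n} | supp s k \subset J & #|J| == i]|)%:R).
  apply: eq_bigr => i _; congr (_ * _).
  rewrite (eq_bigr (fun J : {set 'I_n} => \sum_(s : {ffun 'I_k -> 'I_n.+1} | supp s k \subset J) seq_prob p s)); last first.
    by move=> J _; rewrite sum_sub.
  rewrite (exchange_big_dep xpredT) //=; apply: eq_bigr => s _.
  rewrite (eq_bigl (mem [set J : {set 'I_n} | supp s k \subset J & #|J| == i])); last first.
    by move=> J; rewrite !inE andbC.
  by rewrite sumr_const mulr_natr.
transitivity (\sum_(s : {ffun 'I_k -> 'I_n.+1}) seq_prob p s *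
   \sum_(i < c) (-1) ^+ (c - 1 - i) * ('C(n - i - 1, n - c))%:R *
      (#|[set J : {set 'I_n} | supp s k \subset J & #|J| == i]|)%:R).
  under eq_bigr => i _ do rewrite big_distrr.
  rewrite exchange_big; apply: eq_bigr => s _; rewrite big_distrr.
  by apply: eq_bigr => i _ /=; rewrite mulrCA.
apply: eq_bigr => s _; congr (_ * _).
rewrite -(@Sc R n #|supp s k| c cn) big_mkord; apply: eq_bigr => i _.
rewrite cnt_sup card_ord /XX; congr (_ * _ * _).
have ic : (i < c)%N by [].
rewrite -bin_sub; last by lia.
by congr ('C(_, _))%:R; lia.
Qed.
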